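(* For every integer $n>1$, $$E_n=\sum_{N=1}^{\lfloor n/2\rfloor}(-1)^N\sum_{\substack{1\le q_1,\dots,q_{2N-1}\le\lfloor n/2\rfloor\\ (2q_1-1)+\cdots+(2q_{2N-1}-1)=n-1}}\frac{(n-1)!}{(2q_1-1)!\cdots(2q_{2N-1}-1)!}.$$
   Context: The Euler numbers $E_n$ are defined by $\sum_{n\ge0}E_nz^n/n!=1/\cosh z$ (so $E_n=0$ for odd $n$). The inner sum is over ordered $(2N-1)$-tuples. *)

(* Defs.v *)
From mathcomp Require Import all_boot all_algebra.
Import GRing.Theory.
Local Open Scope ring_scope.

Definition cosh_coef (k : nat) : rat := if odd k then 0 else (k`!%:R)^-1.

(* E is the sequence of Euler numbers: as formal power series,
   (sum_n E n z^n / n!) * cosh z = 1, i.e. sum_n E n z^n/n! = 1/cosh z.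
   (This identity determines E uniquely.) *)
Definition is_euler_seq (E : nat -> rat) : Prop :=
  forall n : nat,
    \sum_(k < n.+1) cosh_coef k * (E (n - k)%N / ((n - k)`!)%:R)
    = (n == 0%N)%:R.

(* Main.v *)
Require Import Defs.
From mathcomp Require Import all_boot all_algebra.
From mathcomp Require Import zify.
Import GRing.Theory Num.Theory.
Local Open Scope ring_scope.

Definition eqm (k : nat) (p q : {poly rat}) := forall i, (i < k)%N -> p`_i = q`_i.

Lemma eqm_sym k p q : eqm k p q -> eqm k q p. Proof. by move=> h i hi; rewrite h. Qed.
Lemma eqm_trans k p q r : eqm k p q -> eqm k q r -> eqm k p r.
Proof. by move=> h1 h2 i hi; rewrite h1 ?h2. Qed.
Lemma eqm_le k l p q : (l <= k)%N -> eqm k p q -> eqm l p q.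
Proof. by move=> hl h i hi; apply: h; apply: leq_trans hl. Qed.
Lemma eqmMl k p q r : eqm k p q -> eqm k (r * p) (r * q).
Proof.
move=> h i hi; rewrite !coefM; apply: eq_bigr => j _; rewrite h //.
by apply: leq_ltn_trans (leq_subr _ _) hi.
Qed.
Lemma eqmMr k p q r : eqm k p q -> eqm k (p * r) (q * r).
Proof. by move=> h; rewrite ![_ * r]mulrC; apply: eqmMl. Qed.
Lemma eqm_deriv k p q : eqm k.+1 p q -> eqm k p^`() q^`().
Proof. by move=> h i hi; rewrite !coef_deriv h. Qed.

Lemma eqm_deriv0 k (p : {poly rat}) : eqm k p^`() 0 -> eqm k.+1 p (p`_0)%:P.
Proof.
move=> h [|i] hi; first by rewrite coefC.
have := h i hi; rewrite coef_deriv coef0 coefC /= => /eqP.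
by rewrite mulrn_eq0 /= => /eqP.
Qed.

Lemma eqm_unit k (p q : {poly rat}) : q`_0 = 1 -> eqm k (p * q) 0 -> eqm k p 0.
Proof.
move=> hq h; elim/ltn_ind => i IH hi; rewrite coef0.
have := h i hi; rewrite coefM big_ord_recr /= subnn hq mulr1 coef0.
rewrite big1 ?add0r // => j _.
by rewrite IH ?coef0 ?mul0r //; apply: ltn_trans (ltn_ord j) hi.
Qed.

Lemma coef_exp_val (p : {poly rat}) k i : p`_0 = 0 -> (i < k)%N -> (p ^+ k)`_i = 0.
Proof.
move=> h0; elim: k i => [//|k IH] i hi.
rewrite exprS coefM big1 // => [[j hj]] _ /=.
case: j hj => [|j] hj; first by rewrite h0 mul0r.
rewrite IH ?mulr0 //; lia.
Qed.

Lemma coef_pow_sum m d (c : nat -> rat) (g : nat -> nat) i :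
  ((\sum_(j < d) c j *: 'X^(g j)) ^+ m)`_i =
  \sum_(f : {ffun 'I_m -> 'I_d} | (\sum_l g (f l) == i)%N) \prod_l c (f l).
Proof.
rewrite -[in LHS](card_ord m) -prodr_const bigA_distr_bigA coef_sum [RHS]big_mkcond /=.
apply: eq_bigr => f _; rewrite scaler_prod prodrXr coefZ coefXn.
rewrite eq_sym; by case: eqP; rewrite ?mulr1 ?mulr0.
Qed.

Lemma inv_fact_mul j : ((j.+1)`!%:R : rat)^-1 *+ j.+1 = (j`!%:R)^-1.
Proof.
rewrite factS natrM invfM -[_ *+ j.+1]mulr_natr mulrAC mulVf ?mul1r //.
by rewrite pnatr_eq0.
Qed.
Lemma coefS d i : (i < 2*d+1)%N ->
  (\sum_(j<d) ((2*j+1)`!%:R : rat)^-1 *: 'X^(2*j+1))`_i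
  = if odd i then (i`!%:R)^-1 else 0.
Proof.
move=> hi; rewrite coef_sum.
have := odd_double_half i; rewrite -mul2n.
move: (i./2) => h; case: (odd i) => /= hh.
  have hd : (h < d)%N by lia.
  rewrite (bigD1 (Ordinal hd)) //= big1 ?addr0.
    by rewrite coefZ coefXn -hh addnC eqxx mulr1.
  move=> j hj; rewrite coefZ coefXn.
  case: eqP => [e|]; last by rewrite mulr0.
  case/eqP: hj; apply: val_inj => /=; lia.
rewrite big1 // => j _; rewrite coefZ coefXn.
case: eqP => [e|]; last by rewrite mulr0.
lia.
Qed.
Arguments eqmMr {k p q} r _ _ _. Arguments eqmMl {k p q} r _ _ _. Arguments eqm_deriv {k p q} _ _ _.
Arguments eqm_trans {k p q r} _ _ _ _. Arguments eqm_sym {k p q} _ _ _. Arguments eqm_le {k l p q} _ _ _ _.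
Arguments eqm_deriv0 {k p} _ _ _. Arguments eqm_unit {k p q} _ _ _ _.

Theorem proposition1 (E : nat -> rat) (hE : is_euler_seq E)
    (n : nat) (hn : (1 < n)%N) :
  E n =
  \sum_(1 <= N < (n./2).+1)
    (-1) ^+ N *
    \sum_(q : {ffun 'I_((2 * N).-1) -> 'I_(n./2)}
            | (\sum_i (2 * q i + 1) == n.-1)%N)
      ((n.-1)`!%:R / (\prod_i (2 * q i + 1)`!)%:R).
Proof.
set d := n./2.
pose c j := ((2*j+1)`!%:R : rat)^-1.
pose S := \sum_(j<d) c j *: 'X^(2*j+1).
pose a N := (-1) ^+ N *: S ^+ (2*N).-1.
pose T := \sum_(1 <= N < d.+1) a N.
pose C := \poly_(k < n.+1) cosh_coef k.
pose F := \poly_(k < n.+1) (E k / (k`!)%:R).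
have hnd : (n <= 2*d+1)%N.
  have := odd_double_half n; rewrite -/d -mul2n; case: (odd n) => /=; lia.
have hS i : (i < n)%N -> S`_i = if odd i then (i`!%:R)^-1 else 0.
  by move=> hi; rewrite /S coefS //; lia.
have hS0 : S`_0 = 0 by rewrite hS //; lia.
rewrite (eq_bigr (fun N => (-1)^+N * ((n.-1)`!%:R * (S ^+ (2*N).-1)`_(n.-1))));
  last first.
  move=> N _; congr (_ * _).
  rewrite /S (coef_pow_sum _ _ c (fun j => 2*j+1)) mulr_sumr /=.
  by apply: eq_bigr => q _; rewrite natr_prod -prodfV.
have eR : \sum_(1 <= N < d.+1) (-1)^+N * ((n.-1)`!%:R * (S ^+ (2*N).-1)`_(n.-1))
   = (n.-1)`!%:R * T`_(n.-1).
  rewrite /T coef_sum mulr_sumr; apply: eq_bigr => N _.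
  by rewrite /a coefZ mulrCA.
rewrite eR; clear eR.
have hCF : eqm n.+1 (C*F) 1.
  move=> m hm; rewrite coefM coef1 -(hE m); apply: eq_bigr => [[j hj]] _ /=.
  rewrite !coef_poly !ifT //; lia.
have hCd : eqm n C^`() S.
  move=> j hj; rewrite coef_deriv coef_poly ltnS hj hS // /cosh_coef /=.
  by case: (odd j) => /=; [rewrite inv_fact_mul | rewrite mul0rn].
have hSd : eqm n.-1 S^`() C.
  move=> j hj; have hj1 : (j.+1 < n)%N by lia.
  have hj2 : (j < n.+1)%N by lia.
  rewrite coef_deriv (hS _ hj1) coef_poly hj2.
  rewrite /cosh_coef /=.
  by case: (odd j) => /=; [rewrite mul0rn | rewrite inv_fact_mul].
have d1 : (1 : {poly rat})^`() = 0 by rewrite -polyC1 derivC.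
have hCFd : eqm n (C^`() * F + C * F^`()) 0.
  by move=> i hi; rewrite -derivM (eqm_deriv hCF i hi) d1.
have hCF' : eqm n (C * F^`()) (- (S * F)).
  move=> i hi; have h1 := hCFd i hi; have h2 := eqmMr F hCd i hi.
  rewrite coefD coef0 in h1; rewrite coefN -h2.
  by apply: (addrI (C^`() * F)`_i); rewrite h1 subrr.
have hC2 : eqm n (C*C*F^`()) (-S).
  move=> i hi; rewrite -mulrA (eqmMl C hCF' i hi) mulrN mulrA (mulrC C S) -mulrA coefN.
  by rewrite (eqmMl S (eqm_le (leqnSn n) hCF) i hi) mulr1 coefN.
have hP' : eqm n.-1 (C*C - S*S)^`() 0.
  move=> i hi; have hi' : (i < n)%N by lia.
  rewrite derivB !derivM !coefB !coefD (eqmMr C hCd i hi') (eqmMl C hCd i hi').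
  by rewrite (eqmMr S hSd i hi) (eqmMl S hSd i hi) (mulrC S C) coef0 subrr.
have hP'' := eqm_deriv0 hP'.
rewrite prednK in hP''; last by lia.
have hP : eqm n (C*C) (1 + S*S).
  move=> i hi; have e := hP'' i hi.
  apply/eqP; rewrite coefD -subr_eq -coefB e coef1 coefC coefB !coef0M hS0.
  rewrite coef_poly /= /cosh_coef /= invr1.
  by case: (i == 0)%N; rewrite /= ?mulr1 ?mul0r ?subr0.
have hmain : eqm n ((1 + S*S) * F^`()) (-S).
  exact: eqm_trans (eqmMr F^`() (eqm_sym hP)) hC2.
have ha : forall N, (0 < N)%N -> a N * (1 + S * S) = a N - a N.+1.
  move=> N hN; rewrite /a mulrDr mulr1 -scalerAl mulrA -!exprSr.
  have -> : ((2 * N.+1).-1 = ((2*N).-1).+2)%N by lia.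
  by rewrite [(-1) ^+ N.+1]exprS mulN1r scaleNr opprK.
have hT : T * (1 + S*S) = - S - a d.+1.
  rewrite /T mulr_suml.
  have -> : \sum_(1 <= N < d.+1) a N * (1 + S*S) = \sum_(1 <= N < d.+1) (a N - a N.+1).
    by apply: eq_big_nat => N /andP[hN _]; rewrite ha.
  have -> : \sum_(1 <= N < d.+1) (a N - a N.+1) = - \sum_(1 <= N < d.+1) (a N.+1 - a N).
    by rewrite -sumrN; apply: eq_bigr => N _; rewrite opprB.
  rewrite telescope_sumr // opprB.
  by rewrite /a /= expr1 scaleN1r.
have hT' : eqm n (T * (1+S*S)) (-S).
  move=> i hi; rewrite hT coefB /a coefZ coef_exp_val ?mulr0 ?subr0 //; lia.
have h0 : eqm n ((T - F^`()) * (1 + S*S)) 0.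
  move=> i hi; rewrite mulrBl coefB hT' // (mulrC F^`()) hmain //.
  by rewrite subrr coef0.
have h1 : (1 + S*S)`_0 = 1 by rewrite coefD coef1 coef0M hS0 mul0r addr0.
have hTF := eqm_unit h1 h0.
have hn1 : (n.-1 < n)%N by lia.
have := hTF _ hn1; rewrite coefB coef0 => /eqP; rewrite subr_eq0 => /eqP ->.
rewrite coef_deriv prednK; last by lia.
rewrite coef_poly ltnSn.
have hm : n = (n.-1).+1 by lia.
move: (n.-1) hm => m hm; rewrite hm factS natrM -[_ *+ m.+1]mulr_natr.
have g1 : (m.+1%:R : rat) != 0 by rewrite pnatr_eq0.
have g2 : (m`!%:R : rat) != 0 by rewrite pnatr_eq0 -lt0n fact_gt0.
by rewrite (mulrC m.+1%:R) invfM !mulrA mulfVK // mulrAC divff // mul1r.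
Qed.
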